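(* Let $I$ be a BPPS instance with $d$ scenarios in which every item has size at least $\varepsilon^2$, let $\bar I$ be its linearly grouped instance, let $\bar{\mathcal{P}}^1$ be an optimal solution for $\bar I$, and let $\mathcal{P}^1$ be obtained from $\bar{\mathcal{P}}^1$ by replacing each item of $\bar G_t^\ell$ by its corresponding item of $G_t^\ell$. Then $\mathrm{val}_{BPPS}(\mathcal{P}^1)\le\mathrm{OPT}(I)$.
   Context: A BPPS instance has $d$ scenarios, items $\mathcal{I}$, each item $i$ with size $s_i$ and type $\mathcal{K}_i\subseteq\{1,\dots,d\}$, and bins of capacity $1$; $S_k=\{i:k\in\mathcal{K}_i\}$. A packing is a partition $\mathcal{P}$ of a set of items with $\sum_{i\in B\cap S_k}s_i\le1$ for all $B\in\mathcal{P}$ and all $k$; its value is $\mathrm{val}_{BPPS}(\mathcal{P})=\max_k|\{B\in\mathcal{P}:B\cap S_k\ne\emptyset\}|$; $\mathrm{OPT}(I)$ is the minimum value of a packing of all items of $I$. $\mathcal{T}$ is the set of all types. Fix $\varepsilon\in(0,1/4]$ with $1/\varepsilon$ an integer, $m=2^d/\varepsilon^3-1$. For each type $t$, the items of type $t$ sorted in nonincreasing size are partitioned into consecutive groups $G_t^0,\dots,G_t^m$, each of the first $m$ having $\lceil|\mathcal{I}_t|/(m+1)\rceil$ items and the last at most that many. For $\ell\in\{1,\dots,m\}$, $\bar G_t^\ell$ contains, for each item of $G_t^\ell$, a corresponding new item of type $t$ with size equal to the largest size in $G_t^\ell$ (this gives a bijection between $G_t^\ell$ and $\bar G_t^\ell$).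 The linearly grouped instance $\bar I$ has item set $\bigcup_{t,\ \ell\ge1}\bar G_t^\ell$. *)

(* Defs.v *)
From HB Require Import structures.
From mathcomp Require Import all_boot all_order all_algebra.
Unset Printing Implicit Defensive.
Import Order.TTheory GRing.Theory Num.Theory.

(* ---------- Generic BPPS notions ----------
   A BPPS instance: d scenarios ('I_d = {0,..,d-1} stands for {1,..,d}),
   a finite type of items T, sizes s : T -> R, types K : T -> {set 'I_d}. *)
Section BPPS.
Context {R : realFieldType} {d : nat} {T : finType}.
Variables (s : T -> R) (K : T -> {set 'I_d}).

Definition Sk (k : 'I_d) : {set T} := [set i | k \in K i].

Definition is_packing (A : {set T}) (P : {set {set T}}) : bool :=
  partition P A &&
  [forall B in P, forall k : 'I_d, (\sum_(i in B :&: Sk k) s i <= 1)%R].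

Definition valBPPS (P : {set {set T}}) : nat :=
  \max_(k : 'I_d) #|[set B in P | B :&: Sk k != set0]|.

(* OPT(I) = minimum value of a packing of all items (the default #|T| of the
   fold is irrelevant as soon as some packing exists, e.g. singletons when all
   sizes are <= 1, since the value of a packing is at most #|T|). *)
Definition OPT : nat :=
  \big[minn/#|T|]_(P : {set {set T}} | is_packing [set: T] P) valBPPS P.

End BPPS.

(* ---------- Linear grouping ----------
   eps = 1/N with N an integer, m = 2^d / eps^3 - 1 = 2^d N^3 - 1. *)
Definition mgroups (d N : nat) : nat := 2 ^ d * N ^ 3 - 1.

Section Grouping.
Context {R : realFieldType} {d : nat} {T : finType}.
Variables (s : T -> R) (K : T -> {set 'I_d}) (N : nat).
(* ord t : the items of type t sorted in nonincreasing size *)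
Variable ord : {set 'I_d} -> seq T.

Definition items_of_type (t : {set 'I_d}) : {set T} := [set i | K i == t].

(* group size ceil(|I_t| / (m+1)) *)
Definition gsize (t : {set 'I_d}) : nat :=
  (#|items_of_type t| + mgroups d N) %/ (mgroups d N).+1.

(* index l of the group G_t^l containing item i (t = K i): positions
   l*q, ..., (l+1)*q - 1 in the sorted list, q = gsize t *)
Definition grp (i : T) : nat := index i (ord (K i)) %/ gsize (K i).

Definition group_of (t : {set 'I_d}) (l : nat) : {set T} :=
  [set i | (K i == t) && (grp i == l)].

Definition gmax (i : T) : R :=
  \big[Num.max/0%R]_(j in group_of (K i) (grp i)) s j.

(* The linearly grouped instance: its items correspond bijectively (via val)
   to the items of I lying in groups G_t^l with l >= 1; the item
   corresponding to i has type K i and size equal to the largest size in the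
   group of i. *)
Definition bar_item : finType := {i : T | 0 < grp i}.
Definition bar_size (x : bar_item) : R := gmax (val x).
Definition bar_type (x : bar_item) : {set 'I_d} := K (val x).

Definition unbar_packing (P : {set {set bar_item}}) : {set {set T}} :=
  [set (fun B : {set bar_item} => [set val x | x in B]) B | B in P].

End Grouping.

(* Main.v *)
Require Import Defs.
From mathcomp Require Import all_boot all_order all_algebra.
From mathcomp Require Import zify.
Import Order.TTheory GRing.Theory Num.Theory.

Lemma sum_sub_le (R : realFieldType) (T : finType) (A B : {set T}) (F : T -> R) :
  A \subset B -> (forall i, 0 <= F i)%R ->
  (\sum_(i in A) F i <= \sum_(i in B) F i)%R.
Proof.
move=> hAB hF.
rewrite [X in (_ <= X)%R](big_setID A) /= (setIidPr hAB) lerDl.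
by apply: sumr_ge0 => i _.
Qed.

Lemma transfer (R : realFieldType) (d : nat) (U T : finType)
  (sU : U -> R) (KU : U -> {set 'I_d}) (sT : T -> R) (KT : T -> {set 'I_d})
  (phi : U -> T) (phi_inj : injective phi)
  (hK : forall x, KT (phi x) = KU x)
  (hs : forall x, (sU x <= sT (phi x))%R)
  (hs0 : forall y, (0 <= sT y)%R)
  (P : {set {set T}}) (hP : is_packing sT KT [set: T] P) :
  exists Q, is_packing sU KU [set: U] Q /\ (valBPPS KU Q <= valBPPS KT P)%N.
Proof.
case/andP: hP => /and3P[/eqP hcov htriv h0] hfeas.
pose Q : {set {set U}} := [set phi @^-1: (B : {set T}) | B in P] :\ set0.
exists Q; split.
  apply/andP; split.
    apply/and3P; split.
    - apply/eqP/setP => x; rewrite inE; apply/bigcupP.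
      have hx : phi x \in cover P by rewrite hcov inE.
      exists (phi @^-1: pblock P (phi x)); last by rewrite inE mem_pblock.
      rewrite !inE; apply/andP; split.
        by apply/set0Pn; exists x; rewrite inE mem_pblock.
      by apply/imsetP; exists (pblock P (phi x)) => //; apply: pblock_mem.
    - apply/trivIsetP => C1 C2; rewrite !inE.
      case/andP=> _ /imsetP[B1 hB1 ->]; case/andP=> _ /imsetP[B2 hB2 ->] hne.
      have hB : B1 != B2 by apply: contraNneq hne => ->.
      have := (trivIsetP htriv) B1 B2 hB1 hB2 hB.
      rewrite -!setI_eq0 -preimsetI => /eqP ->.
      by apply/eqP/setP => x; rewrite !inE.
    - by rewrite !inE eqxx.
  apply/forall_inP => C; rewrite !inE => /andP[_ /imsetP[B hB ->]].
  apply/forallP => k.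
  have := (forall_inP hfeas) B hB; move/forallP/(_ k) => hBk.
  apply: le_trans hBk.
  apply: (le_trans (y := (\sum_(i in phi @^-1: B :&: Sk KU k) sT (phi i))%R)).
    by apply: ler_sum => i _.
  rewrite -big_imset /=; last by move=> a b _ _; apply: phi_inj.
  apply: sum_sub_le => //.
  apply/subsetP => y /imsetP[x]; rewrite !inE => /andP[hx hk] ->.
  by rewrite hx hK hk.
rewrite /valBPPS; apply/bigmax_leqP => k _.
apply: leq_trans (leq_bigmax k).
apply: (leq_trans _ (leq_imset_card (fun B : {set T} => phi @^-1: B) [set B in P | B :&: Sk KT k != set0])).
apply: subset_leq_card.
apply/subsetP => C; rewrite !inE => /andP[/andP[_ /imsetP[B hB ->]] hmeet].
apply/imsetP; exists B => //; rewrite !inE hB /=.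
case/set0Pn: hmeet => x; rewrite !inE => /andP[hx hk].
by apply/set0Pn; exists (phi x); rewrite !inE hx hK hk.
Qed.

Lemma bigmin_le_seq (I : eqType) (r : seq I) (P : pred I) (F : I -> nat) x0 j :
  j \in r -> P j -> (\big[minn/x0]_(i <- r | P i) F i <= F j)%N.
Proof.
elim: r => //= a r IH; rewrite inE big_cons => /orP[/eqP <-|hj] hP.
  by rewrite hP geq_minl.
case: (P a); last exact: IH.
by rewrite geq_min IH ?orbT.
Qed.

Lemma bigmin_le_def (I : eqType) (r : seq I) (P : pred I) (F : I -> nat) x0 :
  (\big[minn/x0]_(i <- r | P i) F i <= x0)%N.
Proof.
elim: r => [|a r IH]; first by rewrite big_nil.
rewrite big_cons; case: (P a) => //.
by rewrite geq_min IH orbT.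
Qed.

Lemma OPT_le (R : realFieldType) (d : nat) (U T : finType)
  (sU : U -> R) (KU : U -> {set 'I_d}) (sT : T -> R) (KT : T -> {set 'I_d})
  (hcard : (#|U| <= #|T|)%N)
  (h : forall P, is_packing sT KT [set: T] P ->
     exists Q, is_packing sU KU [set: U] Q /\ (valBPPS KU Q <= valBPPS KT P)%N) :
  (OPT sU KU <= OPT sT KT)%N.
Proof.
have hle : forall Q, is_packing sU KU [set: U] Q -> (OPT sU KU <= valBPPS KU Q)%N.
  move=> Q hQ; rewrite /OPT; apply: bigmin_le_seq => //; exact: mem_index_enum.
have hdef : (OPT sU KU <= #|U|)%N.
  exact: bigmin_le_def.
rewrite {2}/OPT.
apply: (big_ind (fun v => OPT sU KU <= v)%N).
- exact: leq_trans hdef hcard.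
- by move=> a b ha hb; rewrite leq_min ha hb.
- move=> P hP; case: (h P hP) => Q [hQ hv]; exact: leq_trans (hle Q hQ) hv.
Qed.

Lemma unbar_le (d : nat) (U T : finType) (KU : U -> {set 'I_d}) (KT : T -> {set 'I_d})
  (f : U -> T) (hK : forall x, KT (f x) = KU x) (P : {set {set U}}) :
  (valBPPS KT [set (fun B : {set U} => [set f x | x in B]) B | B in P] <= valBPPS KU P)%N.
Proof.
rewrite /valBPPS; apply/bigmax_leqP => k _.
apply: leq_trans (leq_bigmax k).
apply: (leq_trans _ (leq_imset_card (fun B : {set U} => [set f x | x in B]) [set B in P | B :&: Sk KU k != set0])).
apply: subset_leq_card.
apply/subsetP => C; rewrite !inE => /andP[/imsetP[B hB ->] hmeet].
apply/imsetP; exists B => //; rewrite !inE hB /=.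
case/set0Pn: hmeet => y; rewrite !inE => /andP[/imsetP[x hx ->] hk].
by apply/set0Pn; exists x; rewrite !inE hx -hK hk.
Qed.

Theorem lemma6 (R : realFieldType) (d : nat) (T : finType)
  (s : T -> R) (K : T -> {set 'I_d}) (N : nat)
  (* eps = 1/N in (0, 1/4] *)
  (hN : (4 <= N)%N)
  (* every item has size in [eps^2, 1] *)
  (hs_lo : forall i, ((N%:R : R)^-1 ^+ 2 <= s i)%R)
  (hs_hi : forall i, (s i <= 1)%R)
  (* ord t: items of type t sorted in nonincreasing size *)
  (ord : {set 'I_d} -> seq T)
  (hperm : forall t, perm_eq (ord t) (enum (items_of_type K t)))
  (hsort : forall t, sorted (fun a b => (s b <= s a)%R) (ord t))
  (* an optimal solution of the linearly grouped instance *)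
  (Pbar : {set {set bar_item K N ord}})
  (hPbar : is_packing (bar_size s K N ord) (bar_type K N ord) [set: bar_item K N ord] Pbar)
  (hopt : valBPPS (bar_type K N ord) Pbar
          = OPT (bar_size s K N ord) (bar_type K N ord)) :
  (valBPPS K (unbar_packing K N ord Pbar) <= OPT s K)%N.
Proof.
have s0 : forall y, (0 <= s y)%R.
  by move=> y; apply: le_trans (hs_lo y); rewrite exprn_ge0 // invr_ge0 ler0n.
have mem_ord : forall i, i \in ord (K i).
  by move=> i; rewrite (perm_mem (hperm _)) mem_enum inE.
have uniq_ord : forall t, uniq (ord t).
  by move=> t; rewrite (perm_uniq (hperm t)) enum_uniq.
have mem_ordK : forall t j, j \in ord t -> K j = t.
  by move=> t j; rewrite (perm_mem (hperm t)) mem_enum inE => /eqP.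
have qp : forall i, (0 < grp K N ord i)%N ->
    (0 < gsize K N (K i))%N /\ (gsize K N (K i) <= index i (ord (K i)))%N.
  move=> i; rewrite /grp.
  case: (posnP (gsize K N (K i))) => [->|hq]; first by rewrite divn0.
  by rewrite divn_gt0.
have hlt : forall i, (index i (ord (K i)) < size (ord (K i)))%N.
  by move=> i; rewrite index_mem.
pose phi0 (i : T) : T :=
  nth i (ord (K i)) (index i (ord (K i)) - gsize K N (K i)).
have hlt2 : forall i, (index i (ord (K i)) - gsize K N (K i) < size (ord (K i)))%N.
  by move=> i; apply: leq_ltn_trans (leq_subr _ _) (hlt i).
have phiK : forall i, K (phi0 i) = K i.
  by move=> i; apply: mem_ordK; apply: mem_nth.
have phi_inj0 : forall i j, (0 < grp K N ord i)%N -> (0 < grp K N ord j)%N ->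
    phi0 i = phi0 j -> i = j.
  move=> i j hi hj e.
  have eK : K i = K j by rewrite -(phiK i) -(phiK j) e.
  have [_ qi] := qp i hi; have [_ qj] := qp j hj.
  have mj := mem_ord j; have lj := hlt2 j.
  move: e qj mj lj; rewrite /phi0 -eK => e qj mj lj.
  rewrite [nth j _ _](set_nth_default i) // in e.
  move/eqP: e; rewrite nth_uniq // => /eqP e.
  have e2 : index i (ord (K i)) = index j (ord (K i)) by lia.
  by rewrite -(nth_index i (mem_ord i)) e2 nth_index.
have phis : forall i, (0 < grp K N ord i)%N -> (gmax s K N ord i <= s (phi0 i))%R.
  move=> i hi; rewrite /gmax; apply: bigmax_le => [|j]; first exact: s0.
  rewrite inE => /andP[/eqP hKj /eqP hgj].
  have [hq qi] := qp i hi.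
  have jo : j \in ord (K i) by rewrite -hKj mem_ord.
  rewrite -(nth_index i jo) /phi0.
  have hjl : (index j (ord (K i)) < size (ord (K i)))%N by rewrite index_mem.
  apply: (sorted_leq_nth _ _ i (hsort (K i))).
  - by move=> a b c /= h1 h2; exact: le_trans h2 h1.
  - by move=> a /=; exact: lexx.
  - by rewrite inE hlt2.
  - by rewrite inE.
  move: hgj; rewrite /grp hKj => hgj.
  have h1 := leq_divM (index j (ord (K i))) (gsize K N (K i)).
  have h2 := ltn_ceil (index i (ord (K i))) hq.
  rewrite hgj in h1; rewrite mulSn in h2.
  move: h1 h2; generalize (index i (ord (K i)) %/ gsize K N (K i) * gsize K N (K i)).
  move=> x; lia.
apply: leq_trans (@unbar_le d (bar_item K N ord) T (bar_type K N ord) K val (fun _ => erefl) Pbar) _.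
rewrite hopt.
apply: OPT_le.
  exact: (leq_card val val_inj).
move=> P hP.
apply: (@transfer R d (bar_item K N ord) T (bar_size s K N ord) (bar_type K N ord) s K (fun x : bar_item K N ord => phi0 (val x))) => //.
- move=> x y e; apply: val_inj; exact: phi_inj0 (valP x) (valP y) e.
- move=> x; exact: phis (valP x).
Qed.
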